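(* Let $(p_n)$ be a sequence in $(0,1)$ such that $\lim_{n\to\infty} p_n\log n=\alpha$ exists, let $L$ and $k$ be positive integers, and let $q_{k,n}=\Pr\left(\frac{k-1}{L}\le \frac{N_1}{\log n}<\frac{k}{L}\right)$ where $N_1\sim\mathrm{Geometric}(p_n)$. Let $\mathcal Y_k$ be the collection of output fragments $\vec Y_i$ of the torn-paper channel (block length $n$, tearing probability $p_n$) whose underlying fragment length $N_{\pi_i}$ satisfies $\frac{k-1}{L}\log n\le N_{\pi_i}<\frac{k}{L}\log n$, and let $|\mathcal Y_k|$ be the number of such fragments. Then for any $\epsilon>0$ and all $n$ large enough, $$\Pr\left(\big||\mathcal Y_k| - n p_n q_{k,n}\big| > \epsilon n p_n\right)\le 4e^{-n p_n^2\epsilon^2/4}.$$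
   Context: Logarithms are base 2. The torn-paper channel with block length $n$ and tearing probability $p_n$: the input $X^n\in\{0,1\}^n$ is cut into consecutive fragments $\vec X_1,\dots,\vec X_K$, where $N_1,N_2,\dots$ are i.i.d. $\mathrm{Geometric}(p_n)$ (support $\{1,2,\dots\}$, mean $1/p_n$), $K$ is the smallest index with $\sum_{i=1}^K N_i\ge n$, $\vec X_i$ consists of positions $1+\sum_{j<i}N_j$ through $\sum_{j\le i}N_j$ for $i<K$, and $\vec X_K$ of positions $1+\sum_{j<K}N_j$ through $n$ (equivalently, a cut is placed independently between each pair of consecutive bits with probability $p_n$, so $K=1+\sum_{i=2}^n T_i$ with $T_i$ i.i.d. $\mathrm{Bernoulli}(p_n)$). Given $K$, $\pi$ is a uniformly random permutation of $\{1,\dots,K\}$ and the output is the unordered collection $\{\vec Y_1,\dots,\vec Y_K\}$ with $\vec Y_i=\vec X_{\pi_i}$. *)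

(* Defs.v *)
From HB Require Import structures.
From mathcomp Require Import all_boot all_order all_algebra.
From mathcomp Require Import all_classical all_reals all_analysis.
Set Implicit Arguments. Unset Strict Implicit. Unset Printing Implicit Defensive.
Import Order.TTheory GRing.Theory Num.Theory.
Import numFieldNormedType.Exports.
Local Open Scope classical_set_scope.
Local Open Scope ring_scope.

Definition log2 {R : realType} (x : R) : R := ln x / ln 2.

Definition geom_pmf {R : realType} (p : R) (j : nat) : R :=
  if j is j'.+1 then p * (1 - p) ^+ j' else 0.

(* (N i)_{i : nat} (N 0 = N_1, N 1 = N_2, ...) are i.i.d. *)
Definition iid_geometric {R : realType} (d : measure_display) (T : measurableType d)
  (P : probability T R) (p : R) (N : nat -> T -> nat) : Prop :=
  forall (m : nat) (a : 'I_m -> nat),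
    measurable [set w | forall i : 'I_m, N i w = a i] /\
    P [set w | forall i : 'I_m, N i w = a i] = (\prod_(i < m) geom_pmf p (a i))%:E.

(* number of fragments K for block length n: the smallest K >= 1 with
   N_1 + ... + N_K >= n (0-indexed: sum_(i < K) N i >= n). When all N i >= 1
   (almost surely) the search within K <= n always succeeds. *)
Definition num_frags (n : nat) (Nw : nat -> nat) : nat :=
  (find (fun m => n <= \sum_(i < m.+1) Nw i)%N (iota 0 n)).+1.

Definition in_class {R : realType} (n L k : nat) (len : nat) : bool :=
  ((k.-1)%:R / L%:R * log2 (n%:R : R) <= len%:R) && (len%:R < k%:R / L%:R * log2 (n%:R : R)).

(* |Y_k| : number of fragments i in 1..K whose underlying length N_i is in class k
   (the random permutation pi does not affect this count). *)
Definition card_Yk {R : realType} (n L k : nat) (Nw : nat -> nat) : nat :=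
  count (fun i => @in_class R n L k (Nw i)) (iota 0 (num_frags n Nw)).

(* Main.v *)
Require Import Defs.
From HB Require Import structures.
From mathcomp Require Import all_boot all_order all_algebra.
From mathcomp Require Import all_classical all_reals all_analysis.
From mathcomp Require Import ring lra.
Import Order.TTheory GRing.Theory Num.Theory.
Import numFieldNormedType.Exports.
Set Implicit Arguments. Unset Strict Implicit.

Section Comb.
Context (R : realType) (n L k : nat).

Definition Scnt (m : nat) (g : nat -> nat) :=
  count (fun i => @in_class R n L k (g i)) (iota 0 m).

Lemma num_frags_le g : num_frags n g <= n.+1.
Proof. by rewrite /num_frags ltnS; have := find_size (fun m => n <= \sum_(i < m.+1) g i) (iota 0 n); rewrite size_iota. Qed.

Lemma num_frags_eq g h : (forall i, i <= n -> g i = h i) ->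
  num_frags n g = num_frags n h.
Proof.
move=> gh; rewrite /num_frags; congr S; apply: eq_in_find => m.
rewrite mem_iota add0n => /= mn; congr (n <= _).
apply: eq_bigr => i _; apply: gh; have := ltn_ord i; rewrite ltnS => im.
by apply: leq_trans im (ltnW mn).
Qed.

Lemma card_Yk_eq g h : (forall i, i <= n -> g i = h i) ->
  @card_Yk R n L k g = @card_Yk R n L k h.
Proof.
move=> gh; rewrite /card_Yk (num_frags_eq gh); apply: eq_in_count => i.
rewrite mem_iota add0n /= => iK; rewrite gh //.
by have := leq_trans iK (num_frags_le h).
Qed.

Lemma card_YkE g : @card_Yk R n L k g = Scnt (num_frags n g) g.
Proof. by []. Qed.

Lemma Scnt_mono a b g : a <= b -> Scnt a g <= Scnt b g.
Proof.
by move=> ab; rewrite /Scnt -(subnKC ab) iotaD count_cat leq_addr.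
Qed.

Lemma num_frags_le_m (g : nat -> nat) m : 0 < m -> m <= n -> n <= \sum_(i < m) g i ->
  num_frags n g <= m.
Proof.
move=> m0 mn ns; rewrite /num_frags -(prednK m0) ltnS.
rewrite leqNgt; apply/negP => /(before_find 0).
rewrite nth_iota ?add0n ?prednK //.

by rewrite ns.
Qed.

Lemma num_frags_ge_m (g : nat -> nat) m : m < n -> \sum_(i < m) g i < n ->
  m < num_frags n g.
Proof.
move=> mn ns; rewrite /num_frags ltnS leqNgt; apply/negP => fm.
have hs : has (fun m => n <= \sum_(i < m.+1) g i) (iota 0 n).
  by rewrite has_find size_iota (leq_trans fm) // ltnW.
have := nth_find 0 hs; rewrite nth_iota ?add0n; last by rewrite (leq_trans fm) // ltnW.
set j := find _ _ => nj.
have : \sum_(i < j.+1) g i <= \sum_(i < m) g i.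
  rewrite (big_ord_widen _ g fm) [X in _ <= X](bigID (fun i : 'I_m => i < j.+1)) /=.
  exact: leq_addr.
by move=> /(leq_trans nj); rewrite leqNgt ns.
Qed.

End Comb.

Local Open Scope classical_set_scope.
Local Open Scope ring_scope.


Section Meas.
Context (R : realType) (d : measure_display) (T : measurableType d)
  (P : probability T R).

Lemma union_seq (I : eqType) (s : seq I) (Q : pred I) (F : I -> set T) :
  uniq s -> (forall i, measurable (F i)) ->
  (forall i j, i != j -> F i `&` F j = set0) ->
  measurable [set w | exists2 i, (i \in s) && Q i & F i w] /\
  P [set w | exists2 i, (i \in s) && Q i & F i w] = (\sum_(i <- s | Q i) P (F i))%E.
Proof.
move=> + mF dF; elim: s => [|a s IH] /=.
  rewrite big_nil.
  have -> : [set w | exists2 i, (i \in [::]) && Q i & F i w] = set0.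
    by apply/seteqP; split => w // [i]; rewrite in_nil.
  by split; [exact: measurable0| exact: measure0].
move=> /andP[as_ us]; have [IHm IHe] := IH us.
rewrite big_cons; case: (boolP (Q a)) => Qa.
  have -> : [set w | exists2 i, (i \in a :: s) && Q i & F i w] =
     F a `|` [set w | exists2 i, (i \in s) && Q i & F i w].
    apply/seteqP; split => w.
      move=> [i /andP[]]; rewrite in_cons => /orP[/eqP -> _|is_ Qi] Fw; first by left.
      by right; exists i => //; rewrite is_.
    case=> [Fw|[i /andP[is_ Qi] Fw]]; first by exists a => //; rewrite mem_head.
    by exists i => //; rewrite in_cons is_ orbT.
  split; first exact: measurableU.
  rewrite measureU //; first by congr (_ + _)%E; exact: IHe.
  apply/seteqP; split => w // [Fa [i /andP[is_ _] Fi]].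
  have ai : a != i by apply/eqP => ai; move: as_; rewrite ai is_.
  by have := dF _ _ ai; move/seteqP => [+ _] => /(_ w (conj Fa Fi)).
have -> : [set w | exists2 i, (i \in a :: s) && Q i & F i w] =
     [set w | exists2 i, (i \in s) && Q i & F i w].
  apply/seteqP; split => w [i /andP[]].
    rewrite in_cons => /orP[/eqP eia Qi|is_ Qi] Fw; first by move: Qa; rewrite -eia Qi.
    by exists i => //; rewrite is_.
  by move=> is_ Qi Fw; exists i => //; rewrite in_cons is_ orbT.
by split.
Qed.

End Meas.


Section Cyl.
Context (R : realType) (d : measure_display) (T : measurableType d)
  (P : probability T R) (p : R) (N : nat -> T -> nat)
  (H : iid_geometric P p N).

Lemma cyl_sum (M K : nat) (Q : pred {ffun 'I_M -> 'I_K}) :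
  measurable [set w | exists2 f, Q f & forall i : 'I_M, N i w = f i] /\
  P [set w | exists2 f, Q f & forall i : 'I_M, N i w = f i] =
   (\sum_(f | Q f) \prod_(i < M) geom_pmf p (f i))%:E.
Proof.
pose F (f : {ffun 'I_M -> 'I_K}) := [set w | forall i : 'I_M, N i w = f i].
have -> : [set w | exists2 f, Q f & forall i : 'I_M, N i w = f i] =
   [set w | exists2 f, (f \in index_enum {ffun 'I_M -> 'I_K}) && Q f & F f w].
  apply/seteqP; split => w [f Qf Ff]; exists f => //.
    by rewrite mem_index_enum.
  by move: Qf => /andP[].
have [] := @union_seq R d T P _ (index_enum {ffun 'I_M -> 'I_K}) Q F
   (index_enum_uniq _).
- by move=> f; have [] := H (fun i => nat_of_ord (f i)).
- move=> f g fg; apply/seteqP; split => w // [Ff Fg].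
  move/negP: fg; apply; apply/eqP/ffunP => i; apply/val_inj => /=.
  by rewrite -Ff Fg.
move=> mU ->; split => //.
rewrite -sumEFin; apply: eq_bigr => f _.
by have [] := H (fun i => nat_of_ord (f i)).
Qed.

End Cyl.


Section Chern.
Context (R : realType).

Lemma fin_chernoff (M K m : nat) (w g : nat -> R) (c : R) :
  (forall j, 0 <= w j) -> \sum_(j < K) w j <= 1 -> (m <= M)%N ->
  \sum_(f : {ffun 'I_M -> 'I_K} | c <= \sum_(i < M | (i < m)%N) g (f i))
      \prod_(i < M) w (f i)
   <= expR (- c) * (\sum_(j < K) w j * expR (g j)) ^+ m.
Proof.
move=> w0 w1 mM.
pose h (i : 'I_M) (j : 'I_K) := w j * (if (i < m)%N then expR (g j) else 1).
apply: (@le_trans _ _ (expR (- c) * \prod_(i < M) \sum_(j < K) h i j)).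
  rewrite bigA_distr_bigA mulr_sumr [leRHS](bigID (fun f : {ffun 'I_M -> 'I_K} =>
     c <= \sum_(i < M | (i < m)%N) g (f i))) /=.
  rewrite -[leLHS]addr0; apply: lerD; last first.
    by apply: sumr_ge0 => f _; apply: mulr_ge0; rewrite ?expR_ge0 //;
       apply: prodr_ge0 => i _; rewrite /h mulr_ge0 //; case: ifP; rewrite ?expR_ge0.
  apply: ler_sum => f cle.
  have -> : \prod_(i < M) h i (f i) =
     \prod_(i < M) w (f i) * expR (\sum_(i < M | (i < m)%N) g (f i)).
    rewrite expR_sum [X in _ = _ * X]big_mkcond /= -big_split /=; apply: eq_bigr => i _.
    by rewrite /h; case: ifP.
  rewrite mulrCA -[leLHS]mulr1; apply: ler_wpM2l.
    by apply: prodr_ge0 => i _.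
  rewrite -expRD; apply: le_trans (expR_ge1Dx _); rewrite lerDl addrC subr_ge0 //.
apply: ler_wpM2l; first exact: expR_ge0.
apply: (@le_trans _ _ (\prod_(i < M) if (i < m)%N then
                         \sum_(j < K) w j * expR (g j) else 1)).
  apply: ler_prod => i _; apply/andP; split.
    by apply: sumr_ge0 => j _; rewrite /h mulr_ge0 //; case: ifP; rewrite ?expR_ge0.
  rewrite /h; case: ifP => _ //.
  by under eq_bigr do rewrite mulr1.
rewrite -big_mkcond /= -(big_ord_widen _ (fun _ => \sum_(j < K) w j * expR (g j)) mM).
by rewrite prodr_const card_ord.
Qed.

End Chern.


Section Geom.
Context (R : realType) (p : R) (p01 : 0 < p < 1).

Lemma gpmf_ge0 j : 0 <= geom_pmf p j.
Proof.
case/andP: p01 => p0 p1.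
case: j => [|j] /=; first exact: lexx.
by apply: mulr_ge0; [exact: ltW|apply: exprn_ge0; rewrite subr_ge0 ltW].
Qed.

Lemma geom_sum_le (r : R) K : 0 <= r < 1 -> \sum_(i < K) r ^+ i <= (1 - r)^-1.
Proof.
move=> /andP[r0 r1]; have h : 0 < 1 - r by rewrite subr_gt0.
rewrite -[(1 - r)^-1]mul1r ler_pdivlMr // mulrC.
have -> : (1 - r) * \sum_(i < K) r ^+ i = 1 - r ^+ K.
  by rewrite -opprB mulNr -subrX1 opprB.
by rewrite lerBlDr lerDl exprn_ge0.
Qed.

Lemma geom_mgf_le (y : R) K : 0 <= y -> (1 - p) * y < 1 ->
  \sum_(j < K) geom_pmf p j * y ^+ j <= p * y / (1 - (1 - p) * y).
Proof.
case/andP: p01 => p0 p1 y0 r1.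
have r0 : 0 <= (1 - p) * y by rewrite mulr_ge0 // subr_ge0 ltW.
case: K => [|K].
  rewrite big_ord0; apply: divr_ge0; first by apply: mulr_ge0 => //; exact: ltW.
  by rewrite subr_ge0 ltW.
rewrite big_ord_recl /= mul0r add0r.
have -> : \sum_(i < K) geom_pmf p (bump 0 i) * y ^+ bump 0 i =
          p * y * \sum_(i < K) ((1 - p) * y) ^+ i.
  rewrite mulr_sumr; apply: eq_bigr => i _; rewrite /bump /= add1n exprS exprMn.
  rewrite /=. by rewrite -!mulrA; congr (_ * _); rewrite mulrCA.
apply: ler_wpM2l; first by apply: mulr_ge0 => //; exact: ltW.
by apply: geom_sum_le; rewrite r0 r1.
Qed.

End Geom.

Section Mgf.
Context (R : realType) (p : R) (p01 : 0 < p < 1).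

Lemma gpmf_sum_le1 K : \sum_(j < K) geom_pmf p j <= 1.
Proof.
case/andP: p01 => p0 p1.
have := @geom_mgf_le R p p01 1 K ler01.
have -> : p * 1 / (1 - (1 - p) * 1) = 1 by field; lra.
under eq_bigr do rewrite expr1n mulr1; apply; lra.
Qed.

Lemma inv1D_le (c : R) : 0 <= c -> (1 + c)^-1 <= expR (- (c / (1 + c))).
Proof.
move=> c0; have h : 0 < 1 + c by lra.
apply: le_trans (expR_ge1Dx _).
have e : 1 + - (c / (1 + c)) = (1 + c)^-1 by field; lra.
by rewrite e.
Qed.

Lemma inv1B_le (c : R) : c < 1 -> (1 - c)^-1 <= expR (c / (1 - c)).
Proof.
move=> c1; have h : 0 < 1 - c by lra.
apply: le_trans (expR_ge1Dx _).
have e : 1 + c / (1 - c) = (1 - c)^-1 by field; lra.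
by rewrite e.
Qed.

Lemma expR_le_inv (l : R) : l < 1 -> expR l <= (1 - l)^-1.
Proof.
move=> l1; have h : 0 < 1 - l by lra.
have := expR_ge1Dx (- l); rewrite expRN => H.
by rewrite -[expR l]invrK lef_pV2 ?posrE ?invr_gt0 ?expR_gt0 // addrC.
Qed.

Lemma mgf_E1 (c : R) K : 0 < c ->
  \sum_(j < K) geom_pmf p j * expR (- (j%:R * (c * p))) <= expR (- (c / (1 + c))).
Proof.
case/andP: p01 => p0 p1 c0.
set l := c * p; have l0 : 0 < l by rewrite mulr_gt0.
set y := expR (- l).
have y0 : 0 < y by exact: expR_gt0.
have y1 : y <= 1 by rewrite /y -expR0 ler_expR; lra.
have r1 : (1 - p) * y < 1.
  by apply: (@le_lt_trans _ _ ((1 - p) * 1)); [apply: ler_wpM2l; lra|lra].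
under eq_bigr do rewrite -mulrN expRM_natl.
apply: le_trans (geom_mgf_le p01 K (ltW y0) r1) _.
apply: le_trans (inv1D_le (ltW c0)).
have ey : expR l * y = 1 by rewrite /y -expRD subrr expR0.
have el : 1 + l <= expR l by exact: expR_ge1Dx.
have -> : p * y / (1 - (1 - p) * y) = p / (expR l - 1 + p).
  have h : 0 < expR l by exact: expR_gt0.
  apply/eqP; rewrite eqr_div; first last.
  - by rewrite gt_eqF //; lra.
  - rewrite gt_eqF // subr_gt0 //.
  apply/eqP; nra.
have -> : (1 + c)^-1 = p / (l + p).
  have h1 : c * p + p != 0 by rewrite gt_eqF //; nra.
  have h2 : 1 + c != 0 by rewrite gt_eqF //; lra.
  by rewrite /l; field; rewrite h1 h2.
apply: ler_wpM2l; first lra.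
rewrite lef_pV2 ?posrE; lra.
Qed.

Lemma mgf_E2 (c : R) K : 0 < c -> c < 1 ->
  \sum_(j < K) geom_pmf p j * expR (j%:R * (c * p)) <= expR (c / (1 - c)).
Proof.
case/andP: p01 => p0 p1 c0 c1.
set l := c * p; have l0 : 0 < l by rewrite mulr_gt0.
have l1 : l < p by rewrite /l; nra.
set z := expR l.
have z0 : 0 < z by exact: expR_gt0.
have zl : z <= (1 - l)^-1 by apply: expR_le_inv; lra.
have zl' : z * (1 - l) <= 1.
  by rewrite -(ler_pdivlMr _ _ (_ : 0 < 1 - l)) ?mul1r //; lra.
have r1 : (1 - p) * z < 1 by nra.
under eq_bigr do rewrite expRM_natl.
apply: le_trans (geom_mgf_le p01 K (ltW z0) r1) _.
apply: le_trans (inv1B_le c1).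
have -> : (1 - c)^-1 = p / (p - l).
  have h1 : p - c * p != 0 by rewrite gt_eqF //; nra.
  have h2 : 1 - c != 0 by rewrite gt_eqF //; lra.
  by rewrite /l; field; rewrite h1 h2.
rewrite ler_pdivrMr; last by lra.
rewrite mulrAC ler_pdivlMr; last by lra.
nra.
Qed.

Lemma mgf_C (C : pred nat) (a : R) K :
  \sum_(j < K) geom_pmf p j * expR (a * (C j)%:R) <=
  expR ((expR a - 1) * \sum_(j < K | C j) geom_pmf p j).
Proof.
have -> : \sum_(j < K) geom_pmf p j * expR (a * (C j)%:R) =
   \sum_(j < K) geom_pmf p j + (expR a - 1) * \sum_(j < K | C j) geom_pmf p j.
  rewrite mulr_sumr [X in _ = _ + X]big_mkcond /= -big_split /=; apply: eq_bigr => j _.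
  by case: (C j); rewrite /= ?mulr1 ?mulr0 ?expR0 ?addr0 //; ring.
apply: le_trans (expR_ge1Dx _); rewrite lerD2r; exact: gpmf_sum_le1.
Qed.

End Mgf.

Section Det.
Context (R : realType) (n L k : nat).

Lemma det_split (G : nat -> nat) (mu q eps s : R) (m1' m2 : nat) :
  (0 < m2)%N -> (m2 <= n)%N -> (m1' < n)%N -> 0 <= q <= 1 ->
  (m2%:R - mu) * q <= eps * mu - s -> (mu - m1'.+1%:R) * q <= eps * mu - s ->
  eps * mu < `|(@card_Yk R n L k G)%:R - mu * q| ->
  [|| (\sum_(i < m2) G i < n)%N, (n <= \sum_(i < m1') G i)%N,
      m2%:R * q + s <= (Scnt R n L k m2 G)%:R |
      (Scnt R n L k m1'.+1 G)%:R <= m1'.+1%:R * q - s].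
Proof.
move=> m20 m2n m1n /andP[q0 q1] h2 h1 hA.
case: ltnP => [//|E1] /=.
case: ltnP => [E2|//] /=.
have K2 := num_frags_le_m m20 m2n E1.
have K1 := num_frags_ge_m m1n E2.
have S2 := Scnt_mono R n L k G K2.
have S1 := Scnt_mono R n L k G K1.
rewrite -(ler_nat R) in S2; rewrite -(ler_nat R) in S1.
move: hA; rewrite card_YkE ltr_normr => /orP[hA|hA].
  by apply/orP; left; lra.
by apply/orP; right; lra.
Qed.

End Det.


Section Expo.
Context (R : realType).

Lemma expo1 (mu m2 dl : R) : 0 < dl <= 1/4 -> 0 <= mu -> mu * (1 + dl) <= m2 ->
  mu * (dl / 2) - m2 * ((dl / 2) / (1 + dl / 2)) <= - (mu * dl ^+ 2 / 5).
Proof.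
move=> /andP[d0 d1] mu0 hm.
have h : 0 < 1 + dl / 2 by lra.
have e1 : m2 * ((dl / 2) / (1 + dl / 2)) >= mu * (1 + dl) * ((dl / 2) / (1 + dl / 2)).
  by apply: ler_wpM2r => //; apply: divr_ge0; lra.
apply: le_trans (_ : mu * (dl / 2) - mu * (1 + dl) * ((dl / 2) / (1 + dl / 2)) <= _).
  by lra.
have -> : mu * (dl / 2) - mu * (1 + dl) * (dl / 2 / (1 + dl / 2)) =
          - (mu * dl ^+ 2 / (4 + 2 * dl)).
  by field; lra.
rewrite lerN2 ler_pdivrMr; last by lra.
rewrite mulrAC ler_pdivlMr; last by lra.
have : 0 <= mu * dl ^+ 2 by rewrite mulr_ge0 // sqr_ge0.
nra.
Qed.

Lemma expo2 (mu m1 dl : R) : 0 < dl <= 1/4 -> 0 <= mu -> 0 <= m1 ->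
  m1 <= mu * (1 - dl) ->
  - (mu * (dl / 2)) + m1 * ((dl / 2) / (1 - dl / 2)) <= - (mu * dl ^+ 2 / 5).
Proof.
move=> /andP[d0 d1] mu0 m10 hm.
have h : 0 < 1 - dl / 2 by lra.
have e1 : m1 * ((dl / 2) / (1 - dl / 2)) <= mu * (1 - dl) * ((dl / 2) / (1 - dl / 2)).
  by apply: ler_wpM2r => //; apply: divr_ge0; lra.
apply: le_trans (_ : - (mu * (dl / 2)) + mu * (1 - dl) * ((dl / 2) / (1 - dl / 2)) <= _).
  by lra.
have -> : - (mu * (dl / 2)) + mu * (1 - dl) * (dl / 2 / (1 - dl / 2)) =
          - (mu * dl ^+ 2 / (4 - 2 * dl)).
  by field; lra.
rewrite lerN2 ler_pdivrMr; last by lra.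
rewrite mulrAC ler_pdivlMr; last by lra.
have : 0 <= mu * dl ^+ 2 by rewrite mulr_ge0 // sqr_ge0.
nra.
Qed.

Lemma expo3 (m q l : R) : 0 <= l <= 1/2 -> 0 <= q <= 1 -> 0 <= m ->
  m * q * (expR l - 1 - l) <= 2 * m * l ^+ 2.
Proof.
move=> /andP[l0 l1] /andP[q0 q1] m0.
have a1 : expR l <= (1 - l)^-1 by apply: expR_le_inv; lra.
have a2 : 1 + l <= expR l by exact: expR_ge1Dx.
have a3 : (1 - l)^-1 - 1 - l = l ^+ 2 / (1 - l) by field; lra.
have a4 : l ^+ 2 / (1 - l) <= 2 * l ^+ 2.
  rewrite ler_pdivrMr; last by lra.
  have : 0 <= l ^+ 2 by exact: sqr_ge0.
  nra.
have b : 0 <= expR l - 1 - l <= 2 * l ^+ 2 by apply/andP; split; lra.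
case/andP: b => b1 b2.
have : 0 <= m * q by exact: mulr_ge0.
have : m * q <= m by nra.
have : 0 <= l ^+ 2 by exact: sqr_ge0.
nra.
Qed.

Lemma expo4 (m q l : R) : 0 <= l -> 0 <= q <= 1 -> 0 <= m ->
  m * q * (expR (- l) - 1 + l) <= m * l ^+ 2.
Proof.
move=> l0 /andP[q0 q1] m0.
have a1 : expR (- l) <= (1 + l)^-1.
  by rewrite expRN lef_pV2 ?posrE ?expR_gt0 //; [exact: expR_ge1Dx | lra].
have a2 : 1 - l <= expR (- l) by exact: expR_ge1Dx.
have a3 : (1 + l)^-1 - 1 + l = l ^+ 2 / (1 + l) by field; lra.
have a4 : l ^+ 2 / (1 + l) <= l ^+ 2.
  rewrite ler_pdivrMr; last by lra.
  have : 0 <= l ^+ 2 by exact: sqr_ge0.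
  nra.
have b : 0 <= expR (- l) - 1 + l <= l ^+ 2 by apply/andP; split; lra.
case/andP: b => b1 b2.
have : 0 <= m * q by exact: mulr_ge0.
have : m * q <= m by nra.
have : 0 <= l ^+ 2 by exact: sqr_ge0.
nra.
Qed.

End Expo.


Section Lim.
Context (R : realType) (d : measure_display) (T : measurableType d)
  (P : probability T R).

Lemma lim_bound (A : set T) (AK : nat -> set T) (b : R) :
  (forall K, measurable (AK K)) -> A = \bigcup_K AK K ->
  (forall K, AK K `<=` AK K.+1) ->
  (exists J, forall K, (J <= K)%N -> (P (AK K) <= b%:E)%E) -> (P A <= b%:E)%E.
Proof.
move=> mK -> inc [J HJ].
have mA : measurable (\bigcup_K AK K) by exact: bigcupT_measurable.
have nd : nondecreasing_seq AK.
  by apply/nondecreasing_seqP => K; apply/subsetPset; exact: inc.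
have := @nondecreasing_cvg_mu d T R P AK mK mA nd.
move/cvge_to_le; apply; exists J => // K /= JK; exact: HJ.
Qed.

Lemma q_eq (n L k : nat) (p : R) (N : nat -> T -> nat) :
  iid_geometric P p N -> exists J, forall K, (J <= K)%N ->
  P [set w | @in_class R n L k (N 0%N w)] =
     (\sum_(j < K | @in_class R n L k j) geom_pmf p j)%:E.
Proof.
move=> H.
set X : R := k%:R / L%:R * log2 (n%:R : R).
exists (Num.truncn X).+1 => K JK.
have cJ : forall j, @in_class R n L k j -> (j < K)%N.
  move=> j /andP[_ jX]; apply: leq_trans JK; rewrite -(ltr_nat R).
  by apply: lt_le_trans jX _; apply: ltW; exact: Num.Theory.truncnS_gt.
have -> : [set w | @in_class R n L k (N 0%N w)] =
  [set w | exists2 f : {ffun 'I_1 -> 'I_K}, @in_class R n L k (f ord0) &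
     forall i : 'I_1, N i w = f i].
  apply/seteqP; split => w /=.
    move=> Cw; exists [ffun i => Ordinal (cJ _ Cw)]; first by rewrite ffunE.
    by move=> i; rewrite ffunE /= (ord1 i).
  by move=> [f Cf /(_ ord0) /= ->].
have [_ ->] := cyl_sum H (fun f : {ffun 'I_1 -> 'I_K} => @in_class R n L k (f ord0)).
congr (_%:E).
rewrite big_mkcond /= [RHS]big_mkcond /=.
have := @bigA_distr_bigA R 0 1 *%R +%R 'I_1 'I_K (fun (i : 'I_1) (j : 'I_K) =>
           if @in_class R n L k j then geom_pmf p j else 0).
rewrite big_ord1 => ->; apply: eq_bigr => f _; rewrite big_ord1.
by rewrite big_ord1.
Qed.

End Lim.


Definition ext (n K : nat) (f : {ffun 'I_n.+1 -> 'I_K}) : nat -> nat :=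
  fun i => if (i <= n)%N then nat_of_ord (f (inord i)) else 0%N.

Lemma ext_val n K (f : {ffun 'I_n.+1 -> 'I_K}) (i : 'I_n.+1) : ext f i = f i.
Proof. by rewrite /ext -ltnS ltn_ord inord_val. Qed.

Lemma ext_sum n K (f : {ffun 'I_n.+1 -> 'I_K}) m : (m <= n.+1)%N ->
  (\sum_(i < m) ext f i)%N = (\sum_(i < n.+1 | (i < m)%N) f i)%N.
Proof.
move=> mn; rewrite (big_ord_widen _ (ext f) mn); apply: eq_bigr => i _.
exact: ext_val.
Qed.

Lemma ext_Scnt (R : realType) n L k K (f : {ffun 'I_n.+1 -> 'I_K}) m :
  (m <= n.+1)%N ->
  Scnt R n L k m (ext f) = (\sum_(i < n.+1 | (i < m)%N) @in_class R n L k (f i))%N.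
Proof.
move=> mn; rewrite /Scnt -sum1_count.
have -> : iota 0 m = index_iota 0 m by rewrite /index_iota subn0.
rewrite big_mkcond /= big_mkord.
rewrite (big_ord_widen _ (fun i => if @in_class R n L k (ext f i) then 1%N else 0%N) mn) big_mkcond /= [RHS]big_mkcond /=.
apply: eq_bigr => i _; rewrite ext_val.
by case: (i < m)%N; case: in_class.
Qed.

Lemma sum_split4 (R : realType) (I : finType) (W : I -> R) (A E1 E2 E3 E4 : pred I) :
  (forall i, 0 <= W i) -> (forall i, A i -> [|| E1 i, E2 i, E3 i | E4 i]) ->
  \sum_(i | A i) W i <= \sum_(i | E1 i) W i + \sum_(i | E2 i) W i +
                       \sum_(i | E3 i) W i + \sum_(i | E4 i) W i.
Proof.
move=> W0 AE.
have h : forall Q : pred I, \sum_(i | Q i) W i = \sum_i (if Q i then W i else 0).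
  by move=> Q; rewrite big_mkcond.
rewrite (h A) (h E1) (h E2) (h E3) (h E4) -!big_split /=.
apply: ler_sum => i _; have := AE i; have := W0 i.
by case: (A i); case: (E1 i); case: (E2 i); case: (E3 i); case: (E4 i) => //= w H;
   rewrite ?addr0 ?add0r //; try lra; have := H isT.
Qed.


Lemma fin3 (R : realType) (A a2 mu lam s e dlt : R) : A <= a2 -> a2 <= 4 * mu * lam ^+ 2 ->
  lam * (e * mu / 2) <= lam * s -> 4 * mu * lam ^+ 2 - lam * (e * mu / 2) = - (mu * e ^+ 2 / 64) ->
  0 <= mu * e ^+ 2 -> dlt = mu * e ^+ 2 / 80 -> A - lam * s <= - dlt.
Proof. move=> *; lra. Qed.

Section MainN.
Context (R : realType) (d : measure_display) (T : measurableType d)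
  (P : probability T R).

Lemma main_n (n L k : nat) (p eps : R) (N : nat -> T -> nat) :
  iid_geometric P p N -> 0 < p < 1 -> 0 < eps -> (2 <= n)%N ->
  p * 4 <= 1 -> p * eps ^+ 2 * 20 <= (Num.min eps 1) ^+ 2 ->
  p * eps ^+ 2 * (4 / eps + 2) <= 1 ->
  let q := fine (P [set w | @in_class R n L k (N 0%N w)]) in
  (P [set w | (eps * n%:R * p <
       Num.norm ((@card_Yk R n L k (fun i => N i w))%:R - n%:R * p * q))%R] <=
     (4 * expR (- (n%:R * p ^+ 2 * eps ^+ 2) / 4))%:E)%E.
Proof.
move=> H p01 eps0 n2 hp1 hp2 hp3; cbv zeta.
set q := fine (P _).
have [p0 p1] : 0 < p /\ p < 1 by case/andP: p01.
set B := 4 * expR _.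
set C := fun j => @in_class R n L k j.
have [J HJ] := q_eq n L k H.
pose Aext K (f : {ffun 'I_n.+1 -> 'I_K}) :=
  eps * n%:R * p < `|(@card_Yk R n L k (ext f))%:R - n%:R * p * q|.
pose AK K := [set w | (eps * n%:R * p <
   `|(@card_Yk R n L k (fun i => N i w))%:R - n%:R * p * q|) /\
   forall i : 'I_n.+1, (N i w < K)%N].
have AKE : forall K, AK K =
    [set w | exists2 f, Aext K f & forall i : 'I_n.+1, N i w = f i].
  move=> K; apply/seteqP; split => w /=.
    move=> [hA hK]; exists [ffun i => Ordinal (hK i)].
      rewrite /Aext (@card_Yk_eq R n L k _ (fun i => N i w)) //.
      by move=> i ilen; rewrite /ext ilen ffunE /= inordK.
    by move=> i; rewrite ffunE.
  move=> [f hA hf]; split; last by move=> i; rewrite hf.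
  move: hA; rewrite /Aext (@card_Yk_eq R n L k _ (fun i => N i w)) //.
  by move=> i ilen; rewrite /ext ilen -hf inordK.
have mAK : forall K, measurable (AK K).
  by move=> K; rewrite AKE; have [] := cyl_sum H (Aext K).
apply: (@lim_bound R d T P _ AK).
- exact: mAK.
- apply/seteqP; split => w /=.
    move=> hA; exists (\sum_(i < n.+1) N i w).+1 => //; split => // i.
    by rewrite ltnS (bigD1 i) //= leq_addr.
  by move=> [K _ [hA _]].
- by move=> K w /= [hA hK]; split => // i; apply: ltnW (hK i).
exists J => K JK.
rewrite AKE; have [_ ->] := cyl_sum H (Aext K); rewrite lee_fin.
have qE : q = \sum_(j < K | C j) geom_pmf p j by rewrite /q (HJ K JK).
have pmf0 : forall j, 0 <= geom_pmf p j.
  by move=> j; exact: (gpmf_ge0 p01).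
have W0 : forall f : {ffun 'I_n.+1 -> 'I_K}, 0 <= \prod_(i < n.+1) geom_pmf p (f i).
  by move=> f; apply: prodr_ge0 => i _.
have pmf1 := gpmf_sum_le1 p01 K.
have q0 : 0 <= q by rewrite qE; apply: sumr_ge0 => j _.
have q1 : q <= 1.
  rewrite qE; apply: le_trans pmf1; rewrite [leRHS](bigID (fun j : 'I_K => C j)) /= lerDl.
  by apply: sumr_ge0 => j _.
case: (lerP 1 B) => hB.
  apply: le_trans hB.
  apply: (@le_trans _ _ (\sum_(f : {ffun 'I_n.+1 -> 'I_K}) \prod_(i < n.+1) geom_pmf p (f i))).
    by rewrite [leRHS](bigID (Aext K)) /= lerDl; apply: sumr_ge0 => f _.
  have E := @bigA_distr_bigA R 0 1 *%R +%R 'I_n.+1 'I_K (fun i j => geom_pmf p j).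
  rewrite /= in E; rewrite -E.
  by apply: prodr_ile1 => i _; rewrite pmf1 andbT; apply: sumr_ge0 => j _.
set mu := n%:R * p.
set x := n%:R * p ^+ 2 * eps ^+ 2.
have xE : x = mu * p * eps ^+ 2 by rewrite /x /mu; ring.
have n2R : 2 <= (n%:R : R) by rewrite (ler_nat R 2 n).
have mu0 : 0 <= mu by rewrite /mu; apply: mulr_ge0; lra.
have muQ : 4 / eps + 2 <= mu.
  rewrite leNgt; apply/negP => hmu.
  have e2 : 0 <= p * eps ^+ 2 by apply: mulr_ge0; [lra|exact: sqr_ge0].
  have hx : x <= 1.
    rewrite xE -mulrA; apply: le_trans hp3.
    by rewrite [leRHS]mulrC; apply: ler_wpM2r => //; exact: ltW.
  have := expR_ge1Dx (- x / 4).
  move: hB; rewrite /B; lra.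
set e := Num.min eps 1.
have e0 : 0 < e by rewrite lt_min eps0 ltr01.
have e1 : e <= 1 by rewrite ge_min lexx orbT.
have ee : e <= eps by rewrite ge_min lexx.
set dl := e / 4.
have dl0 : 0 < dl <= 1/4 by apply/andP; split; rewrite /dl; lra.
have epsmu : 4 <= eps * mu.
  have : eps * (4 / eps) = 4 by field; lra.
  nra.
have hfin : x / 4 <= mu * dl ^+ 2 / 5.
  have : p * eps ^+ 2 <= 4 * dl ^+ 2 / 5.
    by move: hp2; rewrite -/e /dl; lra.
  rewrite xE; nra.
set m2 := (Num.truncn (mu * (1 + dl))).+1.
set m1' := Num.truncn (mu * (1 - dl)).
have [tm2a tm2b] : m2%:R - 1 <= mu * (1 + dl) /\ mu * (1 + dl) < m2%:R.
  have /andP[a b] := @Num.Theory.truncn_itv R (mu * (1 + dl))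
     (mulr_ge0 mu0 (ltW (ltr_wpDr (ltW (proj1 (andP dl0))) ltr01))).
  by rewrite /m2 -natr1; split => //; lra.
have [tm1a tm1b] : m1'%:R <= mu * (1 - dl) /\ mu * (1 - dl) < m1'.+1%:R.
  have h : 0 <= mu * (1 - dl) by apply: mulr_ge0 => //; case/andP: dl0; lra.
  by have /andP[a b] := @Num.Theory.truncn_itv R (mu * (1 - dl)) h.
have m1E : m1'.+1%:R = m1'%:R + 1 :> R by rewrite -natr1.
have muE : mu * (1 + dl) = n%:R * (p * (1 + dl)) by rewrite /mu; ring.
have hm2n : (m2 <= n)%N.
  rewrite -(ler_nat R).
  have : n%:R * (1/2 - p * (1 + dl)) >= 0.
    apply: mulr_ge0; first lra.
    by case/andP: dl0 => _ dl1; nra.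
  nra.
have hm1n : (m1' < n)%N.
  rewrite -(ltr_nat R).
  have : mu < n%:R by rewrite /mu; nra.
  by case/andP: dl0 => dl00 _; nra.
have hm20 : (0 < m2)%N by rewrite /m2.
have hm2M : (m2 <= n.+1)%N by apply: leq_trans hm2n _.
have hm1M : (m1' <= n.+1)%N by apply: leq_trans (ltnW hm1n) _.
have hm1M' : (m1'.+1 <= n.+1)%N by rewrite ltnS ltnW.
have mu2 : 2 <= mu.
  have : 0 <= 4 / eps by apply: divr_ge0; lra.
  lra.
have mudl : 0 <= mu * dl <= mu / 4.
  by case/andP: dl0 => dl00 dl1; apply/andP; split; nra.
have hm2mu : m2%:R <= 2 * mu by lra.
have hm1mu : m1'.+1%:R <= 2 * mu by lra.
set s := eps * mu / 2.
have mudl2 : mu * dl <= eps * mu / 4 by rewrite /dl; nra.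
have hc2 : (m2%:R - mu) * q <= eps * mu - s.
  have : m2%:R - mu <= eps * mu / 2 by lra.
  rewrite /s; nra.
have hc1 : (mu - m1'.+1%:R) * q <= eps * mu - s.
  have : mu - m1'.+1%:R <= eps * mu / 2.
    by rewrite m1E; lra.
  rewrite /s; nra.
set c1 := dl / 2.
set l1 := c1 * p.
set lam := e / 16.
have c10 : 0 < c1 by rewrite /c1; case/andP: dl0 => ? ?; lra.
have c11 : c1 < 1 by rewrite /c1; case/andP: dl0 => ? ?; lra.
have l10 : 0 <= l1 by rewrite /l1; apply: mulr_ge0; lra.
have lam0 : 0 <= lam <= 1/2 by rewrite /lam; apply/andP; split; lra.
have lam0' : 0 <= lam by case/andP: lam0.
have q01 : 0 <= q <= 1 by rewrite q0 q1.
pose ev1 (f : {ffun 'I_n.+1 -> 'I_K}) := - (n%:R * l1) <=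
  \sum_(i < n.+1 | (i < m2)%N) (fun j : nat => - (j%:R * l1)) (f i).
pose ev2 (f : {ffun 'I_n.+1 -> 'I_K}) := n%:R * l1 <=
  \sum_(i < n.+1 | (i < m1')%N) (fun j : nat => j%:R * l1) (f i).
pose ev3 (f : {ffun 'I_n.+1 -> 'I_K}) := lam * (m2%:R * q + s) <=
  \sum_(i < n.+1 | (i < m2)%N) (fun j : nat => lam * (C j)%:R) (f i).
pose ev4 (f : {ffun 'I_n.+1 -> 'I_K}) := - lam * (m1'.+1%:R * q - s) <=
  \sum_(i < n.+1 | (i < m1'.+1)%N) (fun j : nat => - lam * (C j)%:R) (f i).
have hsplit : forall f, Aext K f -> [|| ev1 f, ev2 f, ev3 f | ev4 f].
  move=> f hA.
  have hA' : eps * mu < `|(@card_Yk R n L k (ext f))%:R - mu * q|.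
    by move: hA; rewrite /Aext /mu mulrA.
  have := @det_split R n L k (ext f) mu q eps s m1' m2 hm20 hm2n hm1n q01 hc2 hc1 hA'.
  move=> /or4P [h|h|h|h]; apply/or4P.
  - constructor 1; rewrite /ev1 /=.
    rewrite sumrN -mulr_suml -natr_sum -ext_sum // lerN2 ler_wpM2r // ler_nat.
    exact: ltnW.
  - constructor 2; rewrite /ev2 /=.
    by rewrite -mulr_suml -natr_sum -ext_sum // ler_wpM2r // ler_nat.
  - constructor 3; rewrite /ev3 /=.
    by rewrite -mulr_sumr -natr_sum -(ext_Scnt R L k) // ler_wpM2l.
  - constructor 4; rewrite /ev4 /=.
    by rewrite -mulr_sumr -natr_sum -(ext_Scnt R L k) // !mulNr lerN2 ler_wpM2l.
apply: le_trans (sum_split4 W0 hsplit) _.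
have hE : expR (- (mu * dl ^+ 2 / 5)) <= expR (- x / 4) by rewrite ler_expR; lra.
have nl1 : n%:R * l1 = mu * (dl / 2) by rewrite /l1 /c1 /mu; ring.
have T1 : \sum_(f | ev1 f) \prod_(i < n.+1) geom_pmf p (f i) <= expR (- x / 4).
  apply: le_trans (@fin_chernoff R n.+1 K m2 (geom_pmf p) (fun j : nat => - (j%:R * l1)) (- (n%:R * l1)) pmf0 pmf1 hm2M) _.
  apply: le_trans (_ : expR (n%:R * l1) * expR (- (c1 / (1 + c1))) ^+ m2 <= _).
    rewrite opprK; apply: ler_wpM2l; first exact: expR_ge0.
    apply: lerXn2r; rewrite ?nnegrE.
    - by apply: sumr_ge0 => j _; apply: mulr_ge0 => //; exact: expR_ge0.
    - exact: expR_ge0.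
    - exact: (mgf_E1 p01 K c10).
  rewrite -expRM_natl -expRD; apply: le_trans hE; rewrite ler_expR.
  by rewrite nl1 /c1 mulrN; exact: expo1 dl0 mu0 (ltW tm2b).
have T2 : \sum_(f | ev2 f) \prod_(i < n.+1) geom_pmf p (f i) <= expR (- x / 4).
  apply: le_trans (@fin_chernoff R n.+1 K m1' (geom_pmf p)
    (fun j : nat => j%:R * l1) (n%:R * l1) pmf0 pmf1 hm1M) _.
  apply: le_trans (_ : expR (- (n%:R * l1)) * expR (c1 / (1 - c1)) ^+ m1' <= _).
    apply: ler_wpM2l; first exact: expR_ge0.
    apply: lerXn2r; rewrite ?nnegrE.
    - by apply: sumr_ge0 => j _; apply: mulr_ge0 => //; exact: expR_ge0.
    - exact: expR_ge0.
    - exact: (mgf_E2 p01 K c10 c11).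
  rewrite -expRM_natl -expRD; apply: le_trans hE; rewrite ler_expR.
  by rewrite nl1 /c1; exact: expo2 dl0 mu0 (ler0n _ m1') tm1a.
have i5 : mu * dl ^+ 2 / 5 = mu * e ^+ 2 / 80 by rewrite /dl; field.
have i6 : 0 <= mu * e ^+ 2 by apply: mulr_ge0 => //; exact: sqr_ge0.
have i3 : lam * (e * mu / 2) <= lam * s.
  apply: ler_wpM2l => //; rewrite /s; apply: ler_wpM2r; first by rewrite invr_ge0.
  exact: ler_wpM2r.
have i4 : 4 * mu * lam ^+ 2 - lam * (e * mu / 2) = - (mu * e ^+ 2 / 64).
  by rewrite /lam; field.
have lam2 : 0 <= lam ^+ 2 by exact: sqr_ge0.
have T3 : \sum_(f | ev3 f) \prod_(i < n.+1) geom_pmf p (f i) <= expR (- x / 4).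
  apply: le_trans (@fin_chernoff R n.+1 K m2 (geom_pmf p) (fun j : nat => lam * (C j)%:R) (lam * (m2%:R * q + s)) pmf0 pmf1 hm2M) _.
  apply: le_trans (_ : expR (- (lam * (m2%:R * q + s))) *
                       expR ((expR lam - 1) * q) ^+ m2 <= _).
    apply: ler_wpM2l; first exact: expR_ge0.
    apply: lerXn2r; rewrite ?nnegrE.
    - by apply: sumr_ge0 => j _; apply: mulr_ge0 => //; exact: expR_ge0.
    - exact: expR_ge0.
    - by rewrite qE; exact: (mgf_C p01 C lam K).
  rewrite -expRM_natl -expRD; apply: le_trans hE; rewrite ler_expR.
  have i1 := expo3 lam0 q01 (ler0n _ m2).
  have i2 : 2 * m2%:R * lam ^+ 2 <= 4 * mu * lam ^+ 2.
    by apply: ler_wpM2r => //; lra.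
  have eq : - (lam * (m2%:R * q + s)) + m2%:R * ((expR lam - 1) * q) =
            m2%:R * q * (expR lam - 1 - lam) - lam * s by ring.
  by rewrite eq; apply: (fin3 i1 i2 i3 i4 i6 i5).
have T4 : \sum_(f | ev4 f) \prod_(i < n.+1) geom_pmf p (f i) <= expR (- x / 4).
  apply: le_trans (@fin_chernoff R n.+1 K m1'.+1 (geom_pmf p) (fun j : nat => - lam * (C j)%:R) (- lam * (m1'.+1%:R * q - s))
    pmf0 pmf1 hm1M') _.
  apply: le_trans (_ : expR (- (- lam * (m1'.+1%:R * q - s))) *
                       expR ((expR (- lam) - 1) * q) ^+ m1'.+1 <= _).
    apply: ler_wpM2l; first exact: expR_ge0.
    apply: lerXn2r; rewrite ?nnegrE.
    - by apply: sumr_ge0 => j _; apply: mulr_ge0 => //; exact: expR_ge0.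
    - exact: expR_ge0.
    - by rewrite qE; exact: (mgf_C p01 C (- lam) K).
  rewrite -expRM_natl -expRD; apply: le_trans hE; rewrite ler_expR.
  have i1 := expo4 lam0' q01 (ler0n _ m1'.+1).
  have i2 : m1'.+1%:R * lam ^+ 2 <= 4 * mu * lam ^+ 2.
    by apply: ler_wpM2r => //; lra.
  have eq : - (- lam * (m1'.+1%:R * q - s)) + m1'.+1%:R * ((expR (- lam) - 1) * q) =
            m1'.+1%:R * q * (expR (- lam) - 1 + lam) - lam * s by ring.
  by rewrite eq; apply: (fin3 i1 i2 i3 i4 i6 i5).
rewrite /B; have -> : 4 * expR (- x / 4) =
  expR (- x / 4) + expR (- x / 4) + expR (- x / 4) + expR (- x / 4) by ring.
by apply: lerD (lerD (lerD T1 T2) T3) T4.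
Qed.

End MainN.


Lemma p_small (R : realType) (p : nat -> R) (alpha kap : R) :
  (forall n, 0 < p n) ->
  (fun n : nat => p n * log2 (n%:R : R)) @ \oo --> alpha -> 0 < kap ->
  \forall n \near \oo, p n <= kap.
Proof.
move=> p0 cv k0.
have := cvgr_dist_lt _ _ cv _ ltr01.
set A := `|alpha| + 1.
have A0 : 0 < A by rewrite /A; have := normr_ge0 alpha; lra.
have l2 : 0 < ln (2 : R) by apply: ln_gt0; lra.
set B := expR (A * ln 2 / kap).
have B0 : 0 < B by exact: expR_gt0.
move=> [N0 _ HN0].
exists (maxn N0 (Num.truncn B).+1) => // n /=; rewrite geq_max => /andP[n1 n2].
have := HN0 n n1 => /= h.
have hB : B < n%:R.
  apply: lt_le_trans (Num.Theory.truncnS_gt B) _; by rewrite ler_nat.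
have n0 : 0 < (n%:R : R) by lra.
have lnB : A * ln 2 / kap <= ln (n%:R : R).
  by rewrite -[X in X <= _](expRK (A * ln 2 / kap)) ler_ln ?posrE ?expR_gt0 //; exact: ltW.
have lg : A / kap <= log2 (n%:R : R).
  rewrite /log2 ler_pdivlMr // mulrAC; done.
have lg0 : 0 < log2 (n%:R : R) by apply: lt_le_trans lg; exact: divr_gt0.
have hp : p n * log2 (n%:R : R) < A.
  move: h; rewrite distrC => h.
  have := ler_norm (p n * log2 (n%:R : R) - alpha).
  have := ler_norm alpha.
  rewrite /A; lra.
have hA : A <= kap * log2 (n%:R : R).
  by move: lg; rewrite ler_pdivrMr // mulrC.
rewrite -(ler_pM2r lg0); lra.
Qed.


Unset Implicit Arguments.

Theorem lemma1 (R : realType) (d : measure_display) (T : measurableType d)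
  (P : probability T R) (p : nat -> R) (alpha : R) (N : nat -> nat -> T -> nat)
  (L k : nat) (eps : R) :
  (forall n, 0 < p n < 1) ->
  (fun n : nat => p n * log2 (n%:R : R)) @ \oo --> alpha ->
  (forall n, iid_geometric P (p n) (N n)) ->
  (0 < L)%N -> (0 < k)%N -> 0 < eps ->
  \forall n \near \oo,
    let q := fine (P [set w | @in_class R n L k (N n 0%N w)]) in
    (P [set w | (eps * n%:R * p n <
                Num.norm ((@card_Yk R n L k (fun i => N n i w))%:R - n%:R * p n * q))%R] <=
     (4 * expR (- (n%:R * p n ^+ 2 * eps ^+ 2) / 4))%:E)%E.
Proof.
move=> hp cv Hiid L0 k0 eps0.
set e := Num.min eps 1.
have e0 : 0 < e by rewrite lt_min eps0 ltr01.
have pp : forall n, 0 < p n by move=> n; case/andP: (hp n).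
have ep2 : 0 < eps ^+ 2 by exact: exprn_gt0.
have Q0 : 0 < 4 / eps + 2.
  have : 0 < 4 / eps by apply: divr_gt0 => //; lra.
  lra.
have b2 : 0 < eps ^+ 2 * 20 by apply: mulr_gt0 => //; lra.
have b3 : 0 < eps ^+ 2 * (4 / eps + 2) by exact: mulr_gt0.
have H1 : \forall n \near \oo, p n <= 1 / 4 by apply: p_small pp cv _; lra.
have H2 : \forall n \near \oo, p n <= e ^+ 2 / (eps ^+ 2 * 20).
  by apply: p_small pp cv _; apply: divr_gt0 => //; exact: exprn_gt0.
have H3 : \forall n \near \oo, p n <= 1 / (eps ^+ 2 * (4 / eps + 2)).
  by apply: p_small pp cv _; exact: divr_gt0.
near=> n.
apply: main_n.
- exact: Hiid.
- exact: hp.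
- exact: eps0.
- by near: n; exists 2%N.
- have : p n <= 1 / 4 by near: n; exact: H1.
  lra.
- have : p n <= e ^+ 2 / (eps ^+ 2 * 20) by near: n; exact: H2.
  by rewrite -mulrA -ler_pdivlMr.
- have : p n <= 1 / (eps ^+ 2 * (4 / eps + 2)) by near: n; exact: H3.
  by rewrite -mulrA -ler_pdivlMr.
Unshelve. all: by end_near.
Qed.
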